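(* Let $F$ be a field of characteristic zero and let $n\ge 2$. Let $C_n$ be the oriented cycle quiver with $n$ vertices and $FC_n$ its path algebra over $F$. Then $\mathrm{Id}(FC_n)=\mathrm{Id}(M_n(F))$.
   Context: The oriented cycle $C_n$ has vertices $1,\dots,n$ and arrows $i\to i+1$ for $1\le i<n$ and $n\to 1$. The path algebra $FC_n$ is the $F$-vector space with basis all paths of $C_n$ (including length-zero paths at each vertex), with product of paths $p,q$ equal to the concatenation $pq$ if the terminal vertex of $p$ equals the starting vertex of $q$, and $0$ otherwise. $M_n(F)$ is the algebra of $n\times n$ matrices over $F$. For an $F$-algebra $A$, $\mathrm{Id}(A)$ denotes the T-ideal of the free associative algebra $F\langle X\rangle$ consisting of all polynomial identities satisfied by $A$. *)

(* Defs.v *)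
From mathcomp Require Import all_boot all_order all_algebra.
Set Implicit Arguments. Unset Strict Implicit. Unset Printing Implicit Defensive.
Import GRing.Theory.
Local Open Scope ring_scope.

(* Elements of the free associative (unital) algebra F<X>, X = {x_0, x_1, ...}:
   finite F-linear combinations of words in the variables; a word is a
   sequence of variable indices (the empty word is the unit 1). *)
Definition ncpoly (F : Type) := seq (F * seq nat).

Section PathAlgebra.
Variables (F : fieldType) (n : nat).

(* Vertices of C_n are 'I_n (vertex i+1 of the paper is i here); the arrows
   are i -> i+1 (mod n).  A path of C_n is determined by its starting vertex
   and its length (from each vertex there is exactly one path of each length);
   (s, 0) is the trivial path e_s at s. *)
Definition cpath := ('I_n * nat)%type.
Definition cpath_target (p : cpath) : nat := ((p.1 : nat) + p.2) %% n.

Definition pathalg := seq (F * cpath).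

Definition pa_coef (a : pathalg) (p : cpath) : F := \sum_(x <- a | x.2 == p) x.1.
Definition pa_is0 (a : pathalg) : Prop := forall p : cpath, pa_coef a p = 0.

Definition pa_scale (c : F) (a : pathalg) : pathalg := [seq (c * x.1, x.2) | x <- a].
Definition pa_mul (a b : pathalg) : pathalg :=
  [seq (x.1 * y.1, (x.2.1, (x.2.2 + y.2.2)%N)) : F * cpath
   | x <- a, y <- [seq y <- b | cpath_target x.2 == nat_of_ord y.2.1]].
Definition pa_one : pathalg := [seq (1, (i, 0%N)) | i <- enum 'I_n].

Definition pa_eval (v : nat -> pathalg) (f : ncpoly F) : pathalg :=
  flatten [seq pa_scale m.1 (foldr (fun j acc => pa_mul (v j) acc) pa_one m.2) | m <- f].

Definition Id_pathalg (f : ncpoly F) : Prop :=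
  forall v : nat -> pathalg, pa_is0 (pa_eval v f).

Definition mx_eval (v : nat -> 'M[F]_n) (f : ncpoly F) : 'M[F]_n :=
  \sum_(m <- f) m.1 *: foldr (fun j acc => v j *m acc) 1%:M m.2.

Definition Id_mx (f : ncpoly F) : Prop :=
  forall v : nat -> 'M[F]_n, mx_eval v f = 0.

End PathAlgebra.

(* Main.v *)
Require Import Defs.
From mathcomp Require Import all_boot all_order all_algebra.
Set Implicit Arguments. Unset Strict Implicit. Unset Printing Implicit Defensive.
Import GRing.Theory.
Local Open Scope ring_scope.

Section Main.
Variables (F : fieldType) (m : nat).
Local Notation N := m.+1.

Definition tgt (p : cpath N) : 'I_N := inord (cpath_target p).

Lemma tgtE p : (tgt p : nat) = cpath_target p.
Proof. by rewrite inordK // /cpath_target ltn_pmod. Qed.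

Definition term (t : F) (x : F * cpath N) : 'M[F]_N :=
  (x.1 * t ^+ x.2.2) *: delta_mx x.2.1 (tgt x.2).

Definition phi (t : F) (a : pathalg F N) : 'M[F]_N := \sum_(x <- a) term t x.

Lemma phi_cat t a b : phi t (a ++ b) = phi t a + phi t b.
Proof. by rewrite /phi big_cat. Qed.

Lemma phi_flatten t s : phi t (flatten s) = \sum_(a <- s) phi t a.
Proof.
elim: s => [|a s IH]; first by rewrite big_nil /phi big_nil.
by rewrite /= phi_cat IH big_cons.
Qed.

Lemma phi_scale t c a : phi t (pa_scale c a) = c *: phi t a.
Proof.
rewrite /phi /pa_scale big_map scaler_sumr; apply: eq_bigr => x _.
by rewrite /term /= scalerA mulrA.
Qed.

Lemma term_mul t x y : term t x *m term t y =
  if cpath_target x.2 == nat_of_ord y.2.1 then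
    term t (x.1 * y.1, (x.2.1, (x.2.2 + y.2.2)%N)) else 0.
Proof.
rewrite /term -scalemxAl -scalemxAr scalerA mul_delta_mx_cond.
have -> : (tgt x.2 == y.2.1) = (cpath_target x.2 == y.2.1).
  by rewrite -(inj_eq val_inj) /= tgtE.
case: eqP => [E|_]; last by rewrite mulr0n scaler0.
rewrite mulr1n /=; congr (_ *: delta_mx _ _).
  by rewrite exprD; rewrite mulrACA.
move: E; rewrite /cpath_target => E.
by apply: val_inj => /=; rewrite !tgtE /cpath_target /= -E modnDml addnA.
Qed.

Lemma phi_mul t a b : phi t (pa_mul a b) = phi t a *m phi t b.
Proof.
rewrite /pa_mul; elim: a => [|x a IH].
  by rewrite /phi !big_nil mul0mx.
rewrite allpairs_cons phi_cat IH [phi t (x :: a)]/phi big_cons -/(phi t a) mulmxDl; congr (_ + _).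
rewrite /phi big_map big_filter mulmx_sumr big_mkcond /=.
by apply: eq_bigr => y _; rewrite term_mul.
Qed.

Lemma phi_one t : phi t (pa_one F N) = 1%:M.
Proof.
rewrite /phi /pa_one big_map big_enum /=.
apply/matrixP => i j; rewrite summxE !mxE.
rewrite (bigD1 i) //= big1 ?addr0.
  rewrite /term /= mul1r expr0.
  have -> : tgt (i, 0%N) = i.
    by apply: val_inj => /=; rewrite tgtE /cpath_target addn0 modn_small.
  by rewrite !mxE eqxx /= mul1r eq_sym.
move=> k /negbTE ki; rewrite /term /= mxE.
by rewrite mxE eq_sym ki /= mulr0.
Qed.

Lemma phi_word t (v : nat -> pathalg F N) w :
  phi t (foldr (fun j acc => pa_mul (v j) acc) (pa_one F N) w) =
  foldr (fun j acc => phi t (v j) *m acc) 1%:M w.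
Proof.
elim: w => [|j w IH] /=; first exact: phi_one.
by rewrite phi_mul IH.
Qed.

Lemma phi_eval t (v : nat -> pathalg F N) (u : nat -> 'M[F]_N) f :
  (forall j, phi t (v j) = u j) ->
  phi t (pa_eval v f) = mx_eval u f.
Proof.
move=> vu; rewrite /pa_eval phi_flatten big_map /mx_eval.
apply: eq_bigr => x _; rewrite phi_scale phi_word; congr (_ *: _).
by elim: x.2 => [|j w IH] //=; rewrite IH vu.
Qed.

Definition P (a : pathalg F N) (i j : 'I_N) : {poly F} :=
  \sum_(x <- a | (x.2.1 == i) && (tgt x.2 == j)) x.1 *: 'X^(x.2.2).

Lemma phiE t a i j : phi t a i j = (P a i j).[t].
Proof.
rewrite /phi summxE /P horner_sum [RHS]big_mkcond /=.
apply: eq_bigr => x _; rewrite /term !mxE.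
rewrite (eq_sym i) (eq_sym j).
case: ifP => _; last by rewrite mulr0.
by rewrite mulr1 hornerZ hornerXn.
Qed.

Lemma coefP a i l :
  (P a i (tgt (i, l)))`_l = pa_coef a (i, l).
Proof.
rewrite /P coef_sum /pa_coef [RHS]big_mkcond [LHS]big_mkcond /=.
apply: eq_bigr => x _; rewrite coefZ coefXn.
case: x => c [s k] /=.
case: (eqVneq (s, k) (i, l)) => [[-> ->]|ne].
  by rewrite !eqxx /= mulr1.
case: (eqVneq s i) => [si|]; last by move=> _; rewrite andFb.
case: (eqVneq k l) => [kl|kl]; first by move: ne; rewrite si kl eqxx.
by case: ifP => _ //; rewrite mulr0.
Qed.

Lemma coefP0 a i j l : pa_is0 a -> (P a i j)`_l = 0.
Proof.
move=> a0.
case: (eqVneq (tgt (i, l)) j) => [<-|ne]; first by rewrite coefP a0.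
rewrite /P coef_sum big1 // => -[c [s k]] /= /andP[/eqP si /eqP tj].
rewrite coefZ coefXn; case: eqP => [lk|]; last by rewrite mulr0.
by move: ne; rewrite -tj -si lk eqxx.
Qed.

Lemma phi0 t a : pa_is0 a -> phi t a = 0.
Proof.
move=> a0; apply/matrixP => i j; rewrite phiE mxE.
have -> : P a i j = 0 by apply/polyP => l; rewrite coefP0 // coef0.
by rewrite horner0.
Qed.

Hypothesis char0 : [pchar F] =i pred0.

Lemma natr_inj_F : injective (fun k : nat => (k%:R : F)).
Proof.
move=> a b /= E; apply/eqP.
wlog le : a b E / (a <= b)%N.
  by move=> W; case: (leqP a b) => [|/ltnW] h; [|rewrite eq_sym]; apply: W.
have := (GRing.pcharf0P F).1 char0 (b - a)%N.
rewrite natrB // E subrr eqxx => /esym /eqP ba.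
by rewrite eqn_leq le /= -subn_eq0 ba.
Qed.

Lemma poly_all0 (p : {poly F}) : (forall t, p.[t] = 0) -> p = 0.
Proof.
move=> H; apply/eqP; apply: contraT => p0.
have := max_poly_roots p0 (rs := [seq k%:R | k <- iota 0 (size p)]).
rewrite size_map size_iota ltnn; apply.
  by apply/allP => x /mapP [k _ ->]; rewrite /root H.
rewrite map_inj_uniq ?iota_uniq //; exact: natr_inj_F.
Qed.

Lemma phi_all0 a : (forall t, phi t a = 0) -> pa_is0 a.
Proof.
move=> H [i l]; rewrite -coefP.
have -> : P a i (tgt (i, l)) = 0.
  by apply: poly_all0 => t; rewrite -phiE H mxE.
by rewrite coef0.
Qed.

Definition lift (w : 'M[F]_N) : pathalg F N :=
  [seq (w i k, (i, (k + (N - i))%N)) | i <- enum 'I_N, k <- enum 'I_N].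

Lemma phi_lift w : phi 1 (lift w) = w.
Proof.
rewrite [RHS]matrix_sum_delta /lift /allpairs_dep phi_flatten big_map big_enum.
apply: eq_bigr => i _; rewrite /phi big_map big_enum; apply: eq_bigr => k _.
rewrite /term /= expr1n mulr1; congr (_ *: delta_mx _ _).
apply: val_inj => /=; rewrite tgtE /cpath_target /= addnC -addnA subnK.
  by rewrite modnDr modn_small.
exact: ltnW (ltn_ord i).
Qed.

End Main.

Theorem corollary3 (F : fieldType) (n : nat) :
  [pchar F] =i pred0 -> (2 <= n)%N ->
  forall f : ncpoly F, Id_pathalg n f <-> Id_mx n f.
Proof.
case: n => [//|m] ch _ f; split.
- move=> H w.
  rewrite -(@phi_eval F m 1 (fun j => lift (w j))); last by move=> j; rewrite phi_lift.
  exact: phi0.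
- move=> H v; apply: (phi_all0 ch) => t.
  by rewrite (@phi_eval F m t v (fun j => phi t (v j))).
Qed.
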